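(* Let $A$ be a finite set and let $f,g$ be partial functions on $A$ with $f \in \mathrm{cPol}(\rho,\rho')$ and $g \in \mathrm{cPol}(\sigma,\sigma')$, where $\rho'\subseteq\rho\subseteq A^h$, $\sigma'\subseteq\sigma\subseteq A^h$ and $\sigma' \subseteq \rho \subseteq \sigma$. Then $f \star g \in \mathrm{cPol}(\rho,\rho')$.
   Context: A partial function of arity $n$ on $A$ is a map $f:\operatorname{dom} f\to A$ with $\operatorname{dom} f\subseteq A^n$. An $n$-ary $f$ preserves the relation pair $(\rho,\rho')$ with $\rho'\subseteq\rho\subseteq A^h$ (written $f\in\mathrm{cPol}(\rho,\rho')$) if for every $h\times n$ matrix whose columns belong to $\rho$ and whose rows belong to $\operatorname{dom} f$, the column obtained by applying $f$ to each row belongs to $\rho'$. For $f$ $n$-ary and $g$ $m$-ary, $f\star g$ is the $(n+m-1)$-ary partial function $(f\star g)(x_1,\dots,x_{n+m-1})=f(g(x_1,\dots,x_m),x_{m+1},\dots,x_{n+m-1})$, defined exactly when $(x_1,\dots,x_m)\in\operatorname{dom} g$ and $(g(x_1,\dots,x_m),x_{m+1},\dots,x_{n+m-1})\in\operatorname{dom} f$. *)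

(* Defs.v *)
From mathcomp Require Import all_boot.
Set Implicit Arguments. Unset Strict Implicit. Unset Printing Implicit Defensive.

Definition pfun (T : Type) (n : nat) := ('I_n -> T) -> option T.

Definition hrel (T : Type) (h : nat) := ('I_h -> T) -> Prop.

Definition rsub (T : Type) (h : nat) (r s : hrel T h) := forall x, r x -> s x.

(* f \in cPol(rho, rho'): for every h x n matrix M (M i j = row i, column j)
   whose columns lie in rho and whose rows lie in dom f, the column obtained
   by applying f to each row lies in rho'. *)
Definition cPol (T : Type) (n h : nat) (rho rho' : hrel T h) (f : pfun T n) :=
  forall (M : 'I_h -> 'I_n -> T) (c : 'I_h -> T),
    (forall j : 'I_n, rho (fun i => M i j)) ->
    (forall i : 'I_h, f (M i) = Some (c i)) ->
    rho' c.

(* f of arity n.+1, g of arity m.+1; f * g has arity (n+m).+1 = (n+1)+(m+1)-1: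
   (f*g)(x_0..x_{n+m}) = f(g(x_0..x_m), x_{m+1}, ..., x_{m+n}). *)
Definition star (T : Type) (n m : nat) (f : pfun T n.+1) (g : pfun T m.+1)
  : pfun T (n + m).+1 :=
  fun x =>
    match g (fun i : 'I_m.+1 => x (inord i)) with
    | None => None
    | Some y => f (fun k : 'I_n.+1 => if val k == 0 then y else x (inord (m + k)))
    end.

(* Main.v *)
Require Import Defs.
From mathcomp Require Import all_boot.

Theorem mainTheorem13 (A : finType) (n m h : nat)
  (f : pfun A n.+1) (g : pfun A m.+1)
  (rho rho' sigma sigma' : hrel A h) :
  rsub rho' rho -> rsub sigma' sigma ->
  rsub sigma' rho -> rsub rho sigma ->
  cPol rho rho' f -> cPol sigma sigma' g ->
  cPol rho rho' (star f g).
Proof.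
move=> _ _ s'r rs Hf Hg M c Hcol Hrow.
have Hdom : forall i, exists y, g (fun j : 'I_m.+1 => M i (inord j)) = Some y.
  move=> i; have := Hrow i; rewrite /star.
  by case: (g _) => [y|] // _; exists y.
pose G i := match g (fun j : 'I_m.+1 => M i (inord j)) with Some y => y | None => c i end.
have HG : forall i, g (fun j : 'I_m.+1 => M i (inord j)) = Some (G i).
  by move=> i; rewrite /G; case: (Hdom i) => y ->.
have HGs : sigma' G.
  apply: (Hg (fun i (j : 'I_m.+1) => M i (inord j))) => //.
  by move=> j; apply: rs; apply: Hcol.
apply: (Hf (fun i (k : 'I_n.+1) => if val k == 0 then G i else M i (inord (m + k)))).
- move=> k; case: (val k == 0).
  + by apply: s'r.
  + exact: Hcol.
- move=> i; have := Hrow i; rewrite /star HG; done.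
Qed.
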